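(* There is an absolute constant $K$ such that for every integer $c \ge 0$, the minimal Fibonacci-DFAO generating the sequence $(t(i+c))_{i \ge 0}$ has at most $K(c+1)$ states, where $t(i)$ is the number of $1$s in the canonical Fibonacci (Zeckendorf) representation of $i$, taken modulo $2$.
   Context: The canonical Fibonacci representation of $i \ge 0$ is the unique binary word $x$ without leading zeros and with no factor $11$ such that $i = [x] := \sum_{j=1}^{\ell} x_j F_{\ell-j+2}$ where $x = x_1\cdots x_\ell$ and $F_0=0,F_1=1,F_k=F_{k-1}+F_{k-2}$. A Fibonacci-DFAO reads valid Fibonacci representations (no factor $11$, leading zeros allowed, output independent of leading zeros) most significant digit first, and generates $(s(i))$ if its output on every representation of $i$ is $s(i)$. *)

(* Defs.v *)
From mathcomp Require Import all_boot.
Set Implicit Arguments. Unset Strict Implicit. Unset Printing Implicit Defensive.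

Fixpoint fib (n : nat) : nat :=
  match n with
  | 0 => 0
  | 1 => 1
  | (m.+1 as p).+1 => fib p + fib m
  end.

(* Value [x] = sum_{j=1}^{l} x_j F_{l-j+2} of a word x = x_1 ... x_l
   (most significant digit first).  With 0-based index j this is
   x_j * F_{l-j+1}. *)
Definition fibval (x : seq bool) : nat :=
  \sum_(j < size x) (nth false x j) * fib (size x - j + 1).

Definition fib_valid (x : seq bool) : bool := ~~ infix [:: true; true] x.

Definition fib_canonical (x : seq bool) : bool :=
  fib_valid x && (if x is b :: _ then b else true).

Definition is_fib_thue_morse (t : nat -> bool) : Prop :=
  forall x, fib_canonical x -> t (fibval x) = odd (count id x).

Definition fib_dfao_generates (Q : finType) (q0 : Q) (d : Q -> bool -> Q)
    (O : Type) (out : Q -> O) (s : nat -> O) : Prop :=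
  forall w : seq bool, fib_valid w -> out (foldl d q0 w) = s (fibval w).

(* Main.v *)
Require Import Defs.
From mathcomp Require Import all_boot zify.

Lemma fibSS n : fib n.+2 = fib n.+1 + fib n. Proof. by []. Qed.

Lemma fib_le_S n : fib n <= fib n.+1.
Proof. case: n => [|n] //. rewrite fibSS. lia. Qed.

Lemma fib_mono m n : m <= n -> fib m <= fib n.
Proof.
move=> /subnK <-. elim: (n - m) => [|k IH] //.
rewrite addSn. exact: leq_trans IH (fib_le_S _).
Qed.

Lemma fibval_cons b r : fibval (b :: r) = b * fib (size r).+2 + fibval r.
Proof.
rewrite /fibval [size (b :: r)]/= big_ord_recl. congr (_ + _).
  by rewrite subn0 addn1.
Qed.

Lemma fibval_nil : fibval [::] = 0. Proof. by rewrite /fibval big_ord0. Qed.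

Lemma valid_nil : fib_valid [::]. Proof. by []. Qed.

Lemma valid_cons b s : fib_valid (b :: s) = ~~ (b && head false s) && fib_valid s.
Proof.
rewrite /fib_valid infix_consl negb_or. congr (~~ _ && _).
by case: b; case: s => [|[] s]; rewrite /= ?prefix0s.
Qed.

Lemma valid_cat_r a b : fib_valid (a ++ b) -> fib_valid b.
Proof. elim: a => [|x a IH] //=. rewrite valid_cons => /andP[_]; exact: IH. Qed.

Lemma valid_cat_l a b : fib_valid (a ++ b) -> fib_valid a.
Proof.
elim: a => [|x a IH] //= . rewrite !valid_cons => /andP[H1 H2].
rewrite IH // andbT. case: a {IH H2} H1 => [|y a] //=. by rewrite andbF.
Qed.

Lemma valid_cat0 a z : fib_valid a -> fib_valid z -> head false z = false ->
  fib_valid (a ++ z).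
Proof.
elim: a => [|x a IH] //= . rewrite !valid_cons => /andP[H1 H2] Hz Hh.
rewrite IH // andbT. case: a {IH H2} H1 => [|y a] //=. by rewrite Hh andbF.
Qed.

Lemma valid_bound z : fib_valid z ->
  fibval z < fib (size z).+2 /\ (head false z = false -> fibval z < fib (size z).+1).
Proof.
elim: z => [|b r IH]; first by rewrite fibval_nil.
rewrite valid_cons fibval_cons => /andP[Hh Hr]. have [IH1 IH2] := IH Hr.
rewrite [size (b :: r)]/= [head false (b :: r)]/=.
case: b Hh => Hh; rewrite [~~ (_ && _)]/= in Hh.
- have H := IH2 (negbTE Hh). split=> //. rewrite mul1n [fib (size r).+3]fibSS. lia.
- rewrite mul0n add0n. split; first exact: leq_trans IH1 (fib_le_S _). by [].
Qed.

Fixpoint zeck (m V : nat) : seq bool :=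
  match m with
  | 0 => [::]
  | m'.+1 => if fib m'.+2 <= V then true :: zeck m' (V - fib m'.+2)
             else false :: zeck m' V
  end.

Lemma zeckP m V : V < fib m.+2 ->
  [/\ fib_valid (zeck m V), size (zeck m V) = m & fibval (zeck m V) = V].
Proof.
elim: m V => [|m IH] V HV.
  by move: HV; rewrite ltnS leqn0 => /eqP ->; rewrite fibval_nil.
change (zeck m.+1 V) with (if fib m.+2 <= V then true :: zeck m (V - fib m.+2) else false :: zeck m V).
case: ifP => HV2.
- have HV' : V - fib m.+2 < fib m.+1 by move: HV; rewrite fibSS; lia.
  have [H1 H2 H3] := IH (V - fib m.+2) (leq_trans HV' (fib_le_S _)).
  split.
  + rewrite valid_cons H1 andbT andTb.
    case: m {IH HV HV2} HV' H1 H2 H3 => [|m] // HV' _ _ _.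
    change (zeck m.+1 (V - fib m.+3)) with (if fib m.+2 <= (V - fib m.+3) then true :: zeck m (V - fib m.+3 - fib m.+2) else false :: zeck m (V - fib m.+3)).
    by rewrite leqNgt HV'.
  + have -> : size (true :: zeck m (V - fib m.+2)) = (size (zeck m (V - fib m.+2))).+1 by [].
    by rewrite H2.
  + rewrite fibval_cons H2 H3 mul1n. lia.
- have HV' : V < fib m.+2 by rewrite ltnNge HV2.
  have [H1 H2 H3] := IH V HV'.
  split.
  + by rewrite valid_cons H1 andbT.
  + have -> : size (false :: zeck m V) = (size (zeck m V)).+1 by [].
    by rewrite H2.
  + by rewrite fibval_cons H3 mul0n.
Qed.

Lemma zuniq z1 z2 : fib_valid z1 -> fib_valid z2 -> size z1 = size z2 ->
  fibval z1 = fibval z2 -> z1 = z2.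
Proof.
elim: z1 z2 => [|b1 r1 IH] [|b2 r2] //= H1 H2 [Hs].
rewrite !fibval_cons Hs. move: H1 H2; rewrite !valid_cons => /andP[_ H1] /andP[_ H2].
have [B1 _] := valid_bound _ H1. have [B2 _] := valid_bound _ H2. rewrite Hs in B1.
case: b1; case: b2 => Hv.
- by rewrite (IH r2) //; lia.
- lia.
- lia.
- by rewrite (IH r2) //; lia.
Qed.

Lemma t_valid t x : is_fib_thue_morse t -> fib_valid x -> t (fibval x) = odd (count id x).
Proof.
move=> Ht. elim: x => [|b r IH]; first by move=> _; apply: Ht.
case: b => Hv; first by apply: Ht; rewrite /fib_canonical Hv.
rewrite fibval_cons mul0n add0n /=. apply: IH. by move: Hv; rewrite valid_cons.
Qed.

Lemma fibval_cat a b z : size b = size z -> fibval (a ++ z) + fibval b = fibval (a ++ b) + fibval z.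
Proof.
move=> Hs. elim: a => [|x a IH] /=; first by rewrite addnC.
rewrite !fibval_cons !size_cat Hs. lia.
Qed.

Lemma fibval_cons2 b r n : size r = n -> fibval (b :: r) = b * fib n.+2 + fibval r.
Proof. move=> <-; exact: fibval_cons. Qed.

Definition E (t : nat -> bool) (c : nat) (y : seq bool) := t (fibval y + c) (+) odd (count id y).
Definition sim t c (w r : seq bool) := forall x, fib_valid (w ++ x) ->
  fib_valid (r ++ x) /\ E t c (w ++ x) = E t c (r ++ x).

Lemma sim_trans t c u v w : sim t c u v -> sim t c v w -> sim t c u w.
Proof.
move=> H1 H2 x Hu. have [Hv E1] := H1 x Hu. have [Hw E2] := H2 x Hv.
by split=> //; rewrite E1.
Qed.

Lemma sim_rcons t c w r b : sim t c w r -> sim t c (rcons w b) (rcons r b).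
Proof. move=> H x. rewrite -!cats1 -!catA. exact: H. Qed.

Lemma E_cons0 t c y : E t c (false :: y) = E t c y.
Proof. by rewrite /E fibval_cons mul0n add0n. Qed.

Lemma sim0l t c y : sim t c (false :: y) y.
Proof. move=> x. rewrite cat_cons valid_cons E_cons0 => /andP[_ H]. by []. Qed.

Lemma sim0r t c y : sim t c y (false :: y).
Proof. move=> x H. by rewrite cat_cons valid_cons E_cons0 H. Qed.

Lemma simB t c a b' : is_fib_thue_morse t -> c <= fib (size b').+1 ->
  sim t c (a ++ [:: false, false & b']) [:: false, false & b'].
Proof.
move=> Ht Hc x. rewrite -catA !cat_cons => Hv. set B := b' ++ x.
have HvB : fib_valid [:: false, false & B] := valid_cat_r _ _ Hv.
split=> //.
have HvB' : fib_valid B by move: HvB; rewrite !valid_cons => /andP[_ /andP[_ ->]].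
have [Bb _] := valid_bound _ HvB'.
have Hc' : c <= fib (size B).+1.
  apply: leq_trans Hc (fib_mono _ _ _); rewrite /B size_cat; lia.
set V := fibval B + c.
have HV : V < fib (size B).+3 by rewrite /V fibSS; lia.
have [Z1 Z2 Z3] := zeckP (size B).+1 V HV.
set z1 := zeck (size B).+1 V in Z1 Z2 Z3.
have Hva : fib_valid a := valid_cat_l _ _ Hv.
have Hvz : fib_valid (a ++ false :: z1).
  by apply: valid_cat0 => //; rewrite valid_cons Z1 andbT.
have Hs : size [:: false, false & B] = size (false :: z1).
  by rewrite /= Z2.
have Hcat := fibval_cat a _ _ Hs.
have F1 : fibval [:: false, false & B] = fibval B by rewrite !fibval_cons !mul0n.
have F2 : fibval (false :: z1) = V by rewrite fibval_cons mul0n Z3.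
rewrite F1 F2 /V in Hcat.
have T1 : t (fibval (a ++ [:: false, false & B]) + c) = odd (count id (a ++ false :: z1)).
  rewrite -(t_valid t _ Ht Hvz). congr t. lia.
have T2 : t (fibval [:: false, false & B] + c) = odd (count id z1).
  by rewrite F1 -/V -Z3 (t_valid t _ Ht Z1).
rewrite /E T1 T2 !count_cat !oddD /=.
by case: (odd (count id a)); case: (odd (count id z1)); case: (odd (count id B)).
Qed.

Lemma simA t c s : is_fib_thue_morse t -> c <= fib (size s).+1 ->
  sim t c [:: true, false, true, false & s] s.
Proof.
move=> Ht Hc x. rewrite !cat_cons => Hv. set S := s ++ x.
have HvS : fib_valid S.
  by move: Hv; rewrite !valid_cons => /andP[_ /andP[_ /andP[_ /andP[_ ->]]]].
split=> //.
have [Sb _] := valid_bound _ HvS.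
have Hc' : c <= fib (size S).+1.
  apply: leq_trans Hc (fib_mono _ _ _); rewrite /S size_cat; lia.
set V := fibval S + c.
have HV : V < fib (size S).+3 by rewrite /V fibSS; lia.
have [Z1 Z2 Z3] := zeckP (size S).+1 V HV.
have hval : fibval [:: true, false, true, false & S] = fib (size S).+4.+1 + fib (size S).+3 + fibval S.
  rewrite (fibval_cons2 _ _ (size S).+3) // (fibval_cons2 _ _ (size S).+2) //.
  rewrite (fibval_cons2 _ _ (size S).+1) // (fibval_cons2 _ _ (size S)) //. lia.
have T2 : t (fibval S + c) = odd (count id (zeck (size S).+1 V)).
  by rewrite -/V -{1}Z3 (t_valid t _ Ht Z1).
move: Z1 Z2 Z3 T2. case: (zeck (size S).+1 V) => [|b r] //= Z1 [Z2] Z3 T2.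
have Hr : fib_valid r by move: Z1; rewrite valid_cons => /andP[_].
case: b Z1 Z3 T2 => Z1 Z3 T2.
- set z' := [:: true, false, false, false, false & r].
  have Hz' : fib_valid z' by rewrite /z' !valid_cons Hr.
  have T1 : t (fibval [:: true, false, true, false & S] + c) = odd (count id z').
    rewrite -(t_valid t _ Ht Hz'). congr t.
    rewrite hval /z' (fibval_cons2 _ _ (size S).+4); last by rewrite /= Z2.
    rewrite !fibval_cons !mul0n !add0n.
    have e0 : forall n, true * n = n by move=> n; exact: mul1n.
    move: Z3; rewrite (fibval_cons2 _ _ (size S)) // e0 /V => Z3.
    have e1 := fibSS (size S).+4. have e2 := fibSS (size S).+3.
    have e3 := fibSS (size S).+2. lia.
  rewrite /E T1 T2 /z' /= !oddD /=.
  by case: (odd (count id r)); case: (odd (count id S)).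
- set z' := [:: false, true, false, true, false & r].
  have Hz' : fib_valid z'.
    by rewrite /z' !valid_cons Hr.
  have T1 : t (fibval [:: true, false, true, false & S] + c) = odd (count id z').
    rewrite -(t_valid t _ Ht Hz'). congr t.
    rewrite hval /z' (fibval_cons2 _ _ (size S).+4); last by rewrite /= Z2.
    rewrite (fibval_cons2 _ _ (size S).+3); last by rewrite /= Z2.
    rewrite (fibval_cons2 _ _ (size S).+2); last by rewrite /= Z2.
    rewrite (fibval_cons2 _ _ (size S).+1); last by rewrite /= Z2.
    rewrite (fibval_cons2 _ _ (size S)) //.
    have e0 : forall n, true * n = n by move=> n; exact: mul1n.
    have e1 : forall n, false * n = 0 by [].
    move: Z3; rewrite (fibval_cons2 _ _ (size S)) // ?e0 ?e1 ?add0n /V => Z3. lia.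
  rewrite /E T1 T2 /z' /= !oddD /=.
  by case: (odd (count id r)); case: (odd (count id S)).
Qed.

Definition reduce (u : seq bool) : seq bool :=
  match u with
  | false :: u' => u'
  | true :: false :: false :: rest => [:: false, false & rest]
  | true :: false :: true :: false :: s => [:: false, false, false & s]
  | _ => behead u
  end.

Lemma reduceP t c k u : is_fib_thue_morse t -> c <= fib k -> fib_valid u -> size u = k + 5 ->
  [/\ fib_valid (reduce u), size (reduce u) = k + 4 & sim t c u (reduce u)].
Proof.
move=> Ht Hc.
case: u => [|[] u]; first by rewrite addnS.
- case: u => [|[] u]; first by rewrite addnS addnS.
  + by rewrite !valid_cons.
  + case: u => [|[] u]; first by rewrite !addnS.
    * case: u => [|[] u]; first by rewrite !addnS.
      - by rewrite !valid_cons /=.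
      - move=> Hv Hs. have Hs' : size u = k + 1 by move: Hs => /=; lia.
        split.
        + exact: (valid_cat_r [:: true; false; true; false] u Hv).
        + rewrite /= Hs'; lia.
        + apply: sim_trans (simA t c u Ht _) _.
            apply: leq_trans Hc (fib_mono _ _ _). lia.
          apply: sim_trans (sim0r t c _) _. apply: sim_trans (sim0r t c _) _.
          exact: sim0r.
    * move=> Hv Hs. have Hs' : size u = k + 2 by move: Hs => /=; lia.
      split.
      - exact: (valid_cat_r [:: true] _ Hv).
      - rewrite /= Hs'; lia.
      - apply: (simB t c [:: true] u Ht). apply: leq_trans Hc (fib_mono _ _ _).
        lia.
- move=> Hv Hs. split.
  + exact: (valid_cat_r [:: false] _ Hv).
  + move: Hs => /=; lia.
  + exact: sim0l.
Qed.

Definition NN k := (fib (k + 4).+2).-1.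
Definition Qt k := (bool * 'I_(NN k).+1)%type.
Definition enc k (r : seq bool) : 'I_(NN k).+1 := inord (fibval r).
Definition dec k (i : 'I_(NN k).+1) : seq bool := zeck (k + 4) i.
Definition q0 k : Qt k := (false, enc k (nseq (k + 4) false)).
Definition dd k (q : Qt k) (b : bool) : Qt k :=
  (q.1 (+) b, enc k (reduce (dec k q.2 ++ [:: b]))).
Definition outf t c k (q : Qt k) : bool := q.1 (+) E t c (dec k q.2).

Lemma NN_S k : (NN k).+1 = fib (k + 4).+2.
Proof.
rewrite /NN prednK //. apply: leq_trans (fib_mono 1 _ _) => //.
Qed.

Lemma dec_enc k r : fib_valid r -> size r = k + 4 -> dec k (enc k r) = r.
Proof.
move=> Hv Hs. have [B _] := valid_bound _ Hv. rewrite Hs in B.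
rewrite /dec /enc inordK; last by rewrite NN_S.
have [Z1 Z2 Z3] := zeckP _ _ B.
apply: zuniq => //. by rewrite Z2.
Qed.

Lemma valid_nseq n : fib_valid (nseq n false).
Proof. by elim: n => [|n IH]. Qed.

Lemma sim_nseq t c n : sim t c [::] (nseq n false).
Proof.
elim: n => [|n IH]; first by move=> x H; split.
apply: sim_trans IH _. exact: sim0r.
Qed.

Lemma inv t c k w : is_fib_thue_morse t -> c <= fib k -> fib_valid w ->
  exists r, [/\ fib_valid r, size r = k + 4,
    foldl (dd k) (q0 k) w = (odd (count id w), enc k r) & sim t c w r].
Proof.
move=> Ht Hc. elim/last_ind: w => [|w b IH] Hv.
  exists (nseq (k + 4) false). split=> //.
  - exact: valid_nseq.
  - by rewrite size_nseq.
  - exact: sim_nseq.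
have Hw : fib_valid w by move: Hv; rewrite -cats1 => /valid_cat_l.
have [r [Hr Hs Hf Hsim]] := IH Hw.
have Hwb : fib_valid (w ++ [:: b]) by rewrite cats1.
have [Hrb _] := Hsim [:: b] Hwb.
have Hsz : size (r ++ [:: b]) = k + 5 by rewrite size_cat Hs /=; lia.
have [R1 R2 R3] := reduceP t c k _ Ht Hc Hrb Hsz.
exists (reduce (r ++ [:: b])). split=> //.
- rewrite foldl_rcons Hf /dd /= dec_enc //. congr pair.
  by rewrite -cats1 count_cat /= addn0 oddD oddb.
- apply: sim_trans R3. rewrite cats1. exact: sim_rcons.
Qed.

Lemma fib_ge n : n <= fib n.+1.
Proof.
elim: n => [|n IH] //. case: n IH => [|n] IH //.
rewrite fibSS. have : 0 < fib n.+1 by apply: leq_trans (fib_mono 1 _ _) => //.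
lia.
Qed.

Lemma fib_2 n : fib n.+1 <= 2 * fib n + 1.
Proof.
case: n => [|n] //. rewrite fibSS. have := fib_le_S n. lia.
Qed.

Theorem theorem14 :
  exists K : nat,
    forall t : nat -> bool, is_fib_thue_morse t ->
    forall c : nat,
      exists (Q : finType) (q0 : Q) (d : Q -> bool -> Q) (out : Q -> bool),
        fib_dfao_generates q0 d out (fun i => t (i + c)) /\
        #|Q| <= K * c.+1.
Proof.
exists 100. move=> t Ht c.
have Hex : exists k, c <= fib k by exists c.+1; exact: fib_ge.
case: (ex_minnP Hex) => k Hk Hmin.
exists (Qt k), (q0 k), (dd k), (outf t c k). split.
- move=> w Hv. have [r [Hr Hs Hf Hsim]] := inv t c k w Ht Hk Hv.
  rewrite Hf /outf /= dec_enc //.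
  have Hw0 : fib_valid (w ++ [::]) by rewrite cats0.
  have [_ HE] := Hsim [::] Hw0. rewrite !cats0 in HE.
  rewrite -HE /E. by case: (t _); case: (odd _).
- rewrite card_prod card_bool card_ord NN_S.
  case: k Hk Hmin => [|m] Hk Hmin.
    have -> : fib (0 + 4).+2 = 8 by []. lia.
  have Hm : fib m < c by rewrite ltnNge; apply/negP => /Hmin; rewrite ltnn.
  have -> : (m.+1 + 4).+2 = m.+4.+3 by lia.
  have := fibSS m.+4.+1. have := fibSS m.+4. have := fibSS m.+3.
  have := fibSS m.+2. have := fibSS m.+1. have := fibSS m. have := fib_2 m.
  lia.
Qed.
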